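(* Suppose the following statement (Conjecture 1) holds: every $D(4)$-triple $\{a,b,c\}$ has a unique extension to a $D(4)$-quadruple $\{a,b,c,d\}$ with $d>\max\{a,b,c\}$. Then the following statement (Conjecture 2) holds: if $\{a_1,b,c,d\}$ is a $D(4)$-quadruple with $a_1<b<c<d$, then $\{a_2,b,c,d\}$ is not a $D(4)$-quadruple for any positive integer $a_2$ with $a_2\neq a_1$ and $a_2<b$.
   Context: A $D(4)$-$m$-tuple is a set of $m$ distinct positive integers such that the product of any two distinct elements increased by $4$ is a perfect square ($m=3$: triple, $m=4$: quadruple). *)

(* Defs.v *)
From Stdlib Require Import Arith.

Definition is_square (n : nat) : Prop := exists k : nat, k * k = n.

Definition D4_pair (x y : nat) : Prop := is_square (x * y + 4).

Definition D4_triple (a b c : nat) : Prop :=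
  0 < a /\ 0 < b /\ 0 < c /\
  a <> b /\ a <> c /\ b <> c /\
  D4_pair a b /\ D4_pair a c /\ D4_pair b c.

Definition D4_quadruple (a b c d : nat) : Prop :=
  0 < a /\ 0 < b /\ 0 < c /\ 0 < d /\
  a <> b /\ a <> c /\ a <> d /\ b <> c /\ b <> d /\ c <> d /\
  D4_pair a b /\ D4_pair a c /\ D4_pair a d /\
  D4_pair b c /\ D4_pair b d /\ D4_pair c d.

Definition Conjecture1 : Prop :=
  forall a b c : nat, D4_triple a b c ->
    exists d : nat, Nat.max a (Nat.max b c) < d /\ D4_quadruple a b c d /\
      forall d' : nat, Nat.max a (Nat.max b c) < d' -> D4_quadruple a b c d' -> d' = d.

Definition Conjecture2 : Prop :=
  forall a1 b c d : nat, D4_quadruple a1 b c d -> a1 < b -> b < c -> c < d ->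
    forall a2 : nat, 0 < a2 -> a2 <> a1 -> a2 < b -> ~ D4_quadruple a2 b c d.

(* Main.v *)
Require Import Defs.
From Stdlib Require Import Arith.
From Stdlib Require Import ZArith Lia Bool.

Lemma half_sq (x n : nat) : x * x = 4 * n -> exists m, x = 2 * m.
Proof.
  intros H. destruct (Nat.Even_or_Odd x) as [[m Hm]|[m Hm]].
  - exists m; lia.
  - subst. nia.
Qed.

Lemma sq_ext (x y z p q u d : nat) : p*p = x*y+4 -> q*q = x*z+4 -> u*u = y*z+4 ->
  2*d = 2*x+2*y+2*z+x*y*z+p*q*u -> is_square (x*d+4).
Proof.
  intros H1 H2 H3 H4.
  assert (E : (x*u+p*q)*(x*u+p*q) = 4*(x*d+4)).
  { nia. }
  destruct (half_sq _ _ E) as [m Hm]. exists m. rewrite Hm in E. nia.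
Qed.

Lemma parity (a b c r s t : nat) : r*r = a*b+4 -> s*s = a*c+4 -> t*t = b*c+4 ->
  exists k, a*b*c + r*s*t = 2*k.
Proof.
  intros H1 H2 H3.
  assert (E : (r*s*t)*(r*s*t) = (a*b+4)*(a*c+4)*(b*c+4)).
  { rewrite <- H1, <- H2, <- H3. ring. }
  apply (f_equal Nat.even) in E.
  rewrite !Nat.even_mul, !Nat.even_add, !Nat.even_mul in E.
  assert (Nat.even (a*b*c + r*s*t) = true).
  { rewrite Nat.even_add, !Nat.even_mul.
    destruct (Nat.even r), (Nat.even s), (Nat.even t), (Nat.even a), (Nat.even b), (Nat.even c);
      simpl in *; congruence. }
  apply Nat.even_spec in H. destruct H as [k Hk]. exists k. exact Hk.
Qed.

Lemma Zreg (a b c d r s t : Z) : (r*r = a*b+4 -> s*s=a*c+4 -> t*t=b*c+4 -> 2*d = 2*a+2*b+2*c+a*b*c+r*s*t ->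
  (a+b-c-d)*(a+b-c-d) = (a*b+4)*(c*d+4))%Z.
Proof.
intros.
assert (4*((a+b-c-d)*(a+b-c-d)) = 4*((a*b+4)*(c*d+4)))%Z. 2: lia.
assert (E: (2*(a+b-c-d) = -(4*c+a*b*c+r*s*t))%Z) by lia.
replace (4*((a+b-c-d)*(a+b-c-d)))%Z with ((2*(a+b-c-d))*(2*(a+b-c-d)))%Z by ring.
rewrite E.
replace (4*((a*b+4)*(c*d+4)))%Z with (2*c*(a*b+4)*(2*d) + 16*(a*b+4))%Z by ring.
rewrite H2. rewrite <- H.
replace ((-(4*c+a*b*c+r*s*t))*(-(4*c+a*b*c+r*s*t)))%Z with (16*c*c+a*b*c*a*b*c+(r*r)*(s*s)*(t*t)+8*a*b*c*c+2*c*r*s*t*(4+a*b))%Z by ring.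
rewrite H, H0, H1. ring.
Qed.

Lemma regular (a b c d : nat) : Conjecture1 -> D4_quadruple a b c d ->
  a < d -> b < d -> c < d ->
  ((Z.of_nat a + Z.of_nat b - Z.of_nat c - Z.of_nat d) * (Z.of_nat a + Z.of_nat b - Z.of_nat c - Z.of_nat d)
   = (Z.of_nat a * Z.of_nat b + 4) * (Z.of_nat c * Z.of_nat d + 4))%Z.
Proof.
  intros C1 Q Had Hbd Hcd.
  destruct Q as (Ha&Hb&Hc&Hd&Nab&Nac&Nad&Nbc&Nbd&Ncd&[r Hr]&[s Hs]&Pad&[t Ht]&Pbd&Pcd).
  assert (T : D4_triple a b c).
  { repeat split; auto; [exists r|exists s|exists t]; auto. }
  destruct (C1 a b c T) as [d0 [_ [_ U]]].
  destruct (parity a b c r s t Hr Hs Ht) as [k Hk].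
  set (dp := a+b+c+k).
  assert (Hdp : 2*dp = 2*a+2*b+2*c+a*b*c+r*s*t) by (unfold dp; lia).
  assert (Eq : d = dp).
  { assert (X1 : d = d0) by (apply U; [lia | repeat split; auto; try (eexists; eauto)]).
    assert (X2 : dp = d0).
    { assert (kpos : 0 < k) by nia.
      apply U; [lia|]. unfold D4_quadruple, D4_pair.
      repeat split; try lia; try (eexists; eassumption).
      - apply (sq_ext a b c r s t); auto; lia.
      - apply (sq_ext b a c r t s); [lia|lia|lia|nia].
      - replace (c*dp+4) with (c*dp+4) by reflexivity.
        apply (sq_ext c a b s t r); [lia|lia|lia|nia]. }
    lia. }
  subst d.
  apply (Zreg _ _ _ _ (Z.of_nat r) (Z.of_nat s) (Z.of_nat t)); lia.
Qed.

Theorem mainTheorem5 : Conjecture1 -> Conjecture2.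
Proof.
  intros C1 a1 b c d Q1 H1 H2 H3 a2 Ha2 Hne Ha2b Q2.
  pose proof (regular a1 b c d C1 Q1 ltac:(lia) ltac:(lia) ltac:(lia)) as E1.
  pose proof (regular a2 b c d C1 Q2 ltac:(lia) ltac:(lia) ltac:(lia)) as E2.
  set (A1 := Z.of_nat a1) in *. set (A2 := Z.of_nat a2) in *.
  set (B := Z.of_nat b) in *. set (Cc := Z.of_nat c) in *. set (D := Z.of_nat d) in *.
  assert (HA : (A1 <> A2)) by (subst A1 A2; lia).
  assert (Hl : (A1 < B /\ A2 < B /\ B < Cc /\ Cc < D /\ 0 < A2)%Z) by (subst A1 A2 B Cc D; lia).
  clearbody A1 A2 B Cc D.
  assert (F : ((A1 - A2) * (A1 + A2 + 2*B - 2*Cc - 2*D - B*(Cc*D+4)) = 0)%Z).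
  { replace ((A1 - A2) * (A1 + A2 + 2*B - 2*Cc - 2*D - B*(Cc*D+4)))%Z with
      (((A1+B-Cc-D)*(A1+B-Cc-D) - (A1*B+4)*(Cc*D+4)) - ((A2+B-Cc-D)*(A2+B-Cc-D) - (A2*B+4)*(Cc*D+4)))%Z by ring.
    rewrite E1, E2. ring. }
  apply Z.mul_eq_0 in F. destruct F as [F|F]; [lia|]. assert (0 <= B*(Cc*D))%Z by (apply Z.mul_nonneg_nonneg; [lia|apply Z.mul_nonneg_nonneg; lia]). assert (B*(Cc*D+4) = B*(Cc*D) + 4*B)%Z by ring. lia.
Qed.
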